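(* Fix integers $T_0\ge 1$ and $t\ge 1$, real parameters $\beta_0,\beta_A$, nonnegative lag weights $g_1,g_2,\dots$ and $\pi_1,\pi_2,\dots$, ascertainment rates $\alpha_1,\dots,\alpha_t$, and a fixed intervention sequence $a_{-T_0+1},\dots,a_0,a_1,\dots,a_t$. Let the seeding values be deterministic: $I_s=0$ for $s\le -T_0$ and $I_s$ given (e.g. $I_s=e^{\mu}$) for $s=-T_0+1,\dots,0$, and write $\bar I_0=(I_{-T_0+1},\dots,I_0)^\top$. Let $I_r(\bar a_r)$, $Y_r(\bar a_r)$, $r=1,\dots,t$, be the counterfactual infection and outcome processes under the intervention fixing $A_s=a_s$ for all $s$, with integrable values, satisfying (with $I_s(\bar a_s):=I_s$ for $s\le 0$) for each $r=1,\dots,t$: \[ \mathbb{E}\big[I_r(\bar a_r)\,\big|\,I_s(\bar a_s),\,s<r;\ Y_s(\bar a_s),\,s<r\big]=\sum_{s<r} e^{\beta_0+\beta_A a_s}\, g_{r-s}\, I_s(\bar a_s)\quad\text{(exponential model)}, \] \[ \mathbb{E}\big[Y_r(\bar a_r)\,\big|\,I_s(\bar a_s),\,s\le r;\ Y_s(\bar a_s),\,s<r\big]=\alpha_r\sum_{s<r}\pi_{r-s}\, I_s(\bar a_s). \] Define the $t\times t$ matrix $\Lambda^e$ by $\Lambda^e(r,s)=g_{r-s}e^{\beta_0+\beta_A a_s}$ for $s<r$ and $0$ otherwise; the $t\times T_0$ matrix $\Lambda^e_0$ with rows indexed by $r=1,\dots,t$ and columns by $s=-T_0+1,\dots,0$,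 $\Lambda^e_0(r,s)=g_{r-s}e^{\beta_0+\beta_A a_s}$; the $t\times t$ matrix $\Pi$ with $\Pi(r,s)=\pi_{r-s}\alpha_r$ for $s<r$ and $0$ otherwise; and the $t\times T_0$ matrix $\Pi_0$ with $\Pi_0(r,s)=\pi_{r-s}\alpha_r$ for $s=-T_0+1,\dots,0$. Then \[ \mathbb{E}[I_t(\bar a_t)]=\big[(\mathrm{id}-\Lambda^e)^{-1}\Lambda^e_0\,\bar I_0\big]_t,\qquad \mathbb{E}[Y_t(\bar a_t)]=\big[\{\Pi(\mathrm{id}-\Lambda^e)^{-1}\Lambda^e_0+\Pi_0\}\,\bar I_0\big]_t, \] where $[v]_t$ denotes the $t$-th (last) entry of the vector $v$. The same formulas hold for the multiplicative model, in which the infection equation is replaced by \[ \mathbb{E}\big[I_r(\bar a_r)\,\big|\,I_s(\bar a_s),\,s<r;\ Y_s(\bar a_s),\,s<r\big]=R(\bar a_r,\beta)\sum_{s<r} g_{r-s}\, I_s(\bar a_s),\qquad R(\bar a_r,\beta)=\frac{K}{1+\exp(\beta_0+\beta_A a_r)} \] for a constant $K>0$, with $\Lambda^e,\Lambda^e_0$ replaced respectively by $\Lambda^m$, $\Lambda^m_0$ defined by $\Lambda^m(r,s)=g_{r-s}R(\bar a_r,\beta)$ for $s<r$ (and $0$ otherwise) and $\Lambda^m_0(r,s)=g_{r-s}R(\bar a_r,\beta)$ for $s=-T_0+1,\dots,0$.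
   Context: This concerns the semi-mechanistic (Hawkes-type) epidemic model: $I_t$ are (unobserved) infections, $Y_t$ observed outcomes (e.g. deaths), $A_t$ an intervention, $g$ the generation-interval distribution and $\pi$ the infection-to-outcome delay distribution, $\alpha_t$ the ascertainment rate and $R$ the reproduction number. The counterfactual $I_t(\bar a_t)$ (resp. $Y_t(\bar a_t)$) is the value $I_t$ (resp. $Y_t$) would take if the intervention history $(A_s)_{s\le t}$ were set to $\bar a_t=(a_s)_{s\le t}$; under this intervention the model equations above hold with $A_s$ replaced by the fixed values $a_s$. $\mathrm{id}$ denotes the $t\times t$ identity matrix (note $\Lambda^e,\Lambda^m$ are strictly lower triangular so $\mathrm{id}-\Lambda$ is invertible). *)

(* Defs.v *)
From HB Require Import structures.
From mathcomp Require Import all_boot all_order all_algebra.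
From mathcomp Require Import all_classical all_reals all_analysis.
Set Implicit Arguments. Unset Strict Implicit. Unset Printing Implicit Defensive.
Import Order.TTheory GRing.Theory Num.Theory.
Local Open Scope classical_set_scope.
Local Open Scope ring_scope.

Section defs.
Context {d : measure_display} {T : measurableType d} {R : realType}.

Definition gen_sigma (J : Type) (S : set J) (X : J -> T -> R) : set (set T) :=
  <<s \bigcup_(i in S) preimage_set_system setT (X i) measurable >>.

Definition is_cond_exp (P : probability T R) (G : set (set T)) (X Z : T -> R) :=
  (forall B : set R, measurable B -> G (Z @^-1` B)) /\
  (forall A, G A -> (\int[P]_(w in A) (X w)%:E = \int[P]_(w in A) (Z w)%:E)%E).

Definition IY (I Y : int -> T -> R) (z : int + int) : T -> R :=
  match z with inl s => I s | inr s => Y s end.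

Definition hist_I (I Y : int -> T -> R) (r : int) : set (set T) :=
  gen_sigma ([set inl s | s in [set s : int | s < r]] `|`
             [set inr s | s in [set s : int | 1 <= s < r]]) (IY I Y).

Definition hist_Y (I Y : int -> T -> R) (r : int) : set (set T) :=
  gen_sigma ([set inl s | s in [set s : int | s <= r]] `|`
             [set inr s | s in [set s : int | 1 <= s < r]]) (IY I Y).
End defs.

(* sum over s < r (s : int) of F s, for a summand vanishing for s <= -T0:
   s ranges over -T0+1, ..., r-1, i.e. s = k - T0 + 1 with k < T0 + r - 1 *)
Definition lagsum {R : realType} (T0 r : nat) (F : int -> R) : R :=
  \sum_(k < T0 + r.-1) F (k%:Z - T0%:Z + 1).

Definition lag (r s : int) : nat := `|r - s|%N.

Definition c_exp {R : realType} (b0 bA : R) (a : int -> R) (r s : int) : R :=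
  expR (b0 + bA * a s).
Definition Rmult {R : realType} (K b0 bA : R) (a : int -> R) (r : int) : R :=
  K / (1 + expR (b0 + bA * a r)).
Definition c_mult {R : realType} (K b0 bA : R) (a : int -> R) (r s : int) : R :=
  Rmult K b0 bA a r.

(* Matrices; row i : 'I_t is time r = i+1; column j : 'I_t is time s = j+1;
   column j : 'I_T0 is time s = j - T0 + 1. *)
Definition Lam {R : realType} (t : nat) (c : int -> int -> R) (g : nat -> R)
  : 'M[R]_t :=
  \matrix_(i, j) if (j < i)%N then g (lag i.+1 j.+1) * c i.+1 j.+1 else 0.
Definition Lam0 {R : realType} (t T0 : nat) (c : int -> int -> R) (g : nat -> R)
  : 'M[R]_(t, T0) :=
  \matrix_(i, j) (g (lag i.+1 (j%:Z - T0%:Z + 1)) * c i.+1 (j%:Z - T0%:Z + 1)).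
Definition PiM {R : realType} (t : nat) (alpha : nat -> R) (pi : nat -> R)
  : 'M[R]_t :=
  \matrix_(i, j) if (j < i)%N then pi (lag i.+1 j.+1) * alpha i.+1 else 0.
Definition PiM0 {R : realType} (t T0 : nat) (alpha : nat -> R) (pi : nat -> R)
  : 'M[R]_(t, T0) :=
  \matrix_(i, j) (pi (lag i.+1 (j%:Z - T0%:Z + 1)) * alpha i.+1).
Definition Ibar0 {R : realType} (T0 : nat) (I0 : int -> R) : 'cV[R]_T0 :=
  \col_j I0 (j%:Z - T0%:Z + 1).

Definition cf_model {d : measure_display} {T : measurableType d} {R : realType}
  (P : probability T R) (T0 t : nat) (c : int -> int -> R) (g pi : nat -> R)
  (alpha : nat -> R) (I0 : int -> R) (I Y : int -> T -> R) : Prop :=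
  [/\ (forall s : int, s <= - T0%:Z -> I s = fun _ => 0),
      (forall s : int, - T0%:Z < s <= 0 -> I s = fun _ => I0 s),
      (forall r : nat, (1 <= r <= t)%N ->
          P.-integrable setT (EFin \o I r) /\ P.-integrable setT (EFin \o Y r)),
      (forall r : nat, (1 <= r <= t)%N ->
          is_cond_exp P (hist_I I Y r) (I r)
            (fun w => lagsum T0 r (fun s => c r s * g (lag r s) * I s w)))
    & (forall r : nat, (1 <= r <= t)%N ->
          is_cond_exp P (hist_Y I Y r) (Y r)
            (fun w => alpha r * lagsum T0 r (fun s => pi (lag r s) * I s w)))].

(* Conclusion: the two expectation formulas, [v]_t = entry at row i with i+1 = t *)
Definition cf_conclusion {d : measure_display} {T : measurableType d} {R : realType}
  (P : probability T R) (T0 t : nat) (c : int -> int -> R) (g pi : nat -> R)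
  (alpha : nat -> R) (I0 : int -> R) (I Y : int -> T -> R) : Prop :=
  forall i : 'I_t, i.+1 = t ->
    ('E_P[I t] = ((invmx (1%:M - Lam t c g) *m Lam0 t T0 c g *m Ibar0 T0 I0) i 0)%:E
    /\ 'E_P[Y t] = (((PiM t alpha pi *m invmx (1%:M - Lam t c g) *m Lam0 t T0 c g
                       + PiM0 t T0 alpha pi) *m Ibar0 T0 I0) i 0)%:E)%E.

(* Main.v *)
Require Import Defs.
From HB Require Import structures.
From mathcomp Require Import all_boot all_order all_algebra.
From mathcomp Require Import all_classical all_reals all_analysis.
From mathcomp Require Import zify.
Set Implicit Arguments. Unset Strict Implicit. Unset Printing Implicit Defensive.
Import Order.TTheory GRing.Theory Num.Theory.
Local Open Scope ring_scope.

Lemma lagsum_split (R : realType) (T0 i : nat) (F : int -> R) :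
  lagsum T0 i.+1 F = \sum_(j < T0) F (j%:Z - T0%:Z + 1) + \sum_(j < i) F (j.+1)%:Z.
Proof.
rewrite /lagsum /= big_split_ord /=; congr (_ + _).
apply: eq_bigr => j _ /=; congr F; lia.
Qed.

Lemma sum_lower (R : realType) (t : nat) (i : 'I_t) (H : nat -> R) :
  \sum_(j < t) (if (j < i)%N then H j else 0) = \sum_(j < i) H j.
Proof.
rewrite (big_ord_widen t H (ltnW (ltn_ord i))) big_mkcond /=.
by rewrite [RHS]big_mkcond.
Qed.

Lemma unit_IL (R : realType) (t : nat) (c : int -> int -> R) (g : nat -> R) :
  (1%:M - Lam t c g) \in unitmx.
Proof.
rewrite unitmxE det_trig; last first.
  apply/is_trig_mxP => i j hij; rewrite !mxE.
  have -> : (i == j) = false by apply/negbTE; rewrite neq_ltn hij.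
  by rewrite ltnNge ltnW //= subr0.
rewrite big1 ?unitr1 // => i _.
by rewrite !mxE eqxx ltnn /= subr0.
Qed.

Lemma algebra_part (R : realType) (T0 t : nat) (c : int -> int -> R) (g pi : nat -> R)
  (alpha : nat -> R) (I0 : int -> R) (mI : int -> R) :
  (forall r : nat, (1 <= r <= t)%N ->
      mI r = lagsum T0 r (fun s => c r s * g (lag r s) * mI s)) ->
  (forall s : int, - T0%:Z < s <= 0 -> mI s = I0 s) ->
  forall i : 'I_t,
    mI i.+1 = (invmx (1%:M - Lam t c g) *m Lam0 t T0 c g *m Ibar0 T0 I0) i 0
    /\ alpha i.+1 * lagsum T0 i.+1 (fun s => pi (lag i.+1 s) * mI s) =
       ((PiM t alpha pi *m invmx (1%:M - Lam t c g) *m Lam0 t T0 c g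
                       + PiM0 t T0 alpha pi) *m Ibar0 T0 I0) i 0.
Proof.
move=> HA HC.
pose m : 'cV[R]_t := \col_i mI (i.+1)%:Z.
have hb0 : forall (F : int -> R), \sum_(j < T0) F (j%:Z - T0%:Z + 1) * mI (j%:Z - T0%:Z + 1)
    = \sum_(j < T0) F (j%:Z - T0%:Z + 1) * I0 (j%:Z - T0%:Z + 1).
  move=> F; apply: eq_bigr => j _; rewrite HC //; have := ltn_ord j; lia.
have key : (1%:M - Lam t c g) *m m = Lam0 t T0 c g *m Ibar0 T0 I0.
  apply/matrixP => i k; rewrite (ord1 k).
  rewrite mulmxBl mul1mx !mxE.
  rewrite HA; last by have := ltn_ord i; lia.
  rewrite lagsum_split.
  have -> : \sum_(j < t) Lam t c g i j * m j 0 =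
            \sum_(j < i) (c i.+1 j.+1 * g (lag i.+1 j.+1) * mI j.+1).
    rewrite -(sum_lower i (fun j : nat => c i.+1 j.+1 * g (lag i.+1 j.+1) * mI j.+1)).
    apply: eq_bigr => j _; rewrite !mxE.
    by case: ifP => _; rewrite ?mul0r // (mulrC (g _)).
  rewrite addrK.
  rewrite (hb0 (fun s => c i.+1 s * g (lag i.+1 s))).
  by apply: eq_bigr => j _; rewrite !mxE (mulrC (g _)).
have hm : m = invmx (1%:M - Lam t c g) *m Lam0 t T0 c g *m Ibar0 T0 I0.
  by rewrite -mulmxA -key mulKmx // unit_IL.
move=> i; split.
  by rewrite -hm mxE.
rewrite mulmxDl -!mulmxA; rewrite -mulmxA in hm; rewrite -hm !mxE.
rewrite lagsum_split mulrDr [RHS]addrC; congr (_ + _).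
  rewrite (hb0 (fun s => pi (lag i.+1 s))) mulr_sumr.
  by apply: eq_bigr => j _; rewrite !mxE mulrA (mulrC (alpha _)).
rewrite mulr_sumr -(sum_lower i (fun j : nat => alpha i.+1 * (pi (lag i.+1 j.+1) * mI j.+1))).
apply: eq_bigr => j _; rewrite !mxE.
case: ifP => _; rewrite ?mul0r //.
by rewrite mulrA (mulrC (alpha _)).
Qed.

Lemma genT (U : Type) (G : set (set U)) : smallest (sigma_algebra [set: U]%classic) G [set: U]%classic.
Proof. by have := @sigma_algebraCD _ [set: U]%classic G _ (@sigma_algebra0 _ [set: U]%classic G); rewrite setD0. Qed.

Section gen.
Context (d : measure_display) (T : measurableType d) (R : realType)
  (P : probability T R) (T0 t : nat) (c : int -> int -> R) (g pi : nat -> R)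
  (alpha : nat -> R) (I0 : int -> R) (I Y : int -> T -> R).

Hypothesis Hm : cf_model P T0 t c g pi alpha I0 I Y.

Definition mI (s : int) : R := fine ('E_P[I s])%E.

Lemma intI (s : int) : - T0%:Z < s <= t%:Z ->
  P.-integrable setT (EFin \o I s) /\ 'E_P[I s]%E = (mI s)%:E.
Proof.
case: Hm => H1 H2 H3 _ _ => hs.
have [s0|s0] := lerP s 0.
  rewrite (H2 s); last by lia.
  have hi : P.-integrable setT (EFin \o cst (I0 s)).
    exact: finite_measure_integrable_cst.
  split=> //.
  rewrite /mI.
  rewrite (H2 s); last by lia.
  move: (expectation_cst P (I0 s)). rewrite /cst => ->. by [].
have [n Hn] : exists n : nat, s = n%:Z.
  by exists `|s|%N; lia.
rewrite Hn in hs s0 *.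
have hn : (1 <= n <= t)%N by lia.
have [hi _] := H3 n hn.
split=> //.
rewrite /mI fineK //.
by rewrite unlock; apply: integrable_fin_num.
Qed.

Lemma mI0 (s : int) : - T0%:Z < s <= 0 -> mI s = I0 s.
Proof.
case: Hm => H1 H2 H3 _ _ => hs.
rewrite /mI (H2 s) //.
by have := expectation_cst P (I0 s); rewrite /cst => ->.
Qed.

Lemma E_lagsum (r : nat) (a : R) (coef : int -> R) : (1 <= r <= t)%N ->
  (\int[P]_(w in setT) (a * lagsum T0 r (fun s => coef s * I s w))%:E)%E
  = (a * lagsum T0 r (fun s => coef s * mI s))%:E.
Proof.
move=> hr; rewrite /lagsum.
under eq_integral do rewrite mulr_sumr -sumEFin.
have hint : forall k : 'I_(T0 + r.-1), (P.-integrable setT (EFin \o I (k%:Z - T0%:Z + 1))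
   /\ 'E_P[I (k%:Z - T0%:Z + 1)]%E = (mI (k%:Z - T0%:Z + 1))%:E).
  move=> k; apply: intI; have := ltn_ord k; lia.
rewrite integral_sum //; last first.
  move=> k; have [hk _] := hint k.
  under eq_fun do rewrite mulrA EFinM.
  exact: integrableZl.
rewrite mulr_sumr -sumEFin; apply: eq_bigr => k _.
have [hk hE] := hint k.
under eq_integral do rewrite mulrA EFinM.
rewrite integralZl // !EFinM -hE unlock muleA; congr (_ * _)%E.
Qed.

Lemma histT_I (r : int) : hist_I I Y r setT.
Proof. exact: genT. Qed.

Lemma histT_Y (r : int) : hist_Y I Y r setT.
Proof. exact: genT. Qed.

Lemma EI (r : nat) : (1 <= r <= t)%N ->
  'E_P[I r]%E = (lagsum T0 r (fun s => c r s * g (lag r s) * mI s))%:E.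
Proof.
move=> hr; case: Hm => _ _ _ H4 _.
have [_ h] := H4 r hr.
rewrite unlock h; last exact: histT_I.
rewrite -[X in X%:E]mul1r -(E_lagsum 1 (fun s => c r s * g (lag r s))) //.
by apply: eq_integral => w _; rewrite mul1r.
Qed.

Lemma EY (r : nat) : (1 <= r <= t)%N ->
  'E_P[Y r]%E = (alpha r * lagsum T0 r (fun s => pi (lag r s) * mI s))%:E.
Proof.
move=> hr; case: Hm => _ _ _ _ H5.
have [_ h] := H5 r hr.
rewrite unlock h; last exact: histT_Y.
by rewrite -(E_lagsum (alpha r) (fun s => pi (lag r s))).
Qed.

Lemma gen_main : cf_conclusion P T0 t c g pi alpha I0 I Y.
Proof.
move=> i hi.
have HA : forall r : nat, (1 <= r <= t)%N ->
    mI r = lagsum T0 r (fun s => c r s * g (lag r s) * mI s).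
  move=> r hr; apply: EFin_inj; rewrite -EI //.
  by have [_ ->] := @intI r ltac:(lia).
have [h1 h2] := algebra_part pi alpha HA mI0 i.
rewrite hi in h1 h2.
have ht : (1 <= t <= t)%N by lia.
split.
  by rewrite (proj2 (@intI t ltac:(lia))) h1.
by rewrite EY // h2.
Qed.

End gen.

Theorem theorem1 (d : measure_display) (T : measurableType d) (R : realType)
  (P : probability T R) (T0 t : nat) (b0 bA : R) (g pi alpha : nat -> R)
  (a : int -> R) (I0 : int -> R) :
  (1 <= T0)%N -> (1 <= t)%N ->
  (forall k : nat, (0 < k)%N -> 0 <= g k) ->
  (forall k : nat, (0 < k)%N -> 0 <= pi k) ->
  (* exponential model *)
  (forall I Y : int -> T -> R,
     cf_model P T0 t (c_exp b0 bA a) g pi alpha I0 I Y ->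
     cf_conclusion P T0 t (c_exp b0 bA a) g pi alpha I0 I Y)
  /\
  (* multiplicative model *)
  (forall K : R, 0 < K ->
   forall I Y : int -> T -> R,
     cf_model P T0 t (c_mult K b0 bA a) g pi alpha I0 I Y ->
     cf_conclusion P T0 t (c_mult K b0 bA a) g pi alpha I0 I Y).
Proof.
move=> _ _ _ _; split.
  by move=> I Y Hm; apply: gen_main.
by move=> K _ I Y Hm; apply: gen_main.
Qed.
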